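(* For all $k,n\ge1$, the group $\mathrm{Hei}_{2k+1}(\mathcal{O}/\mathfrak{p}^n)$ has a faithful complex representation of dimension $\sum_{i=0}^{\xi-1}f\,q^{k(n-i)}$, where $\xi=\min\{n,e\}$.
   Context: $F$ is a non-Archimedean local field with discrete valuation $\nu$, ring of integers $\mathcal{O}$, maximal ideal $\mathfrak{p}$, residue field of size $q=p^f$; $f$ is the absolute inertia degree and $e=\nu(p)$ the absolute ramification index ($e=\infty$ in characteristic $p$). For a commutative unital ring $R$, $\mathrm{Hei}_{2k+1}(R)$ is the group of matrices $\begin{pmatrix}1&\mathbf{x}&z\\0&I_k&\mathbf{y}^T\\0&0&1\end{pmatrix}$ with $\mathbf{x},\mathbf{y}\in R^k$, $z\in R$. *)

(* Defs.v *)
From HB Require Import structures.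
From mathcomp Require Import all_boot all_order all_algebra all_field.
Set Implicit Arguments. Unset Strict Implicit. Unset Printing Implicit Defensive.
Import Order.TTheory GRing.Theory Num.Theory.
Local Open Scope ring_scope.

Section LocalField.
Variables (F : fieldType) (v : F -> int).

Definition in_pow (m : int) (x : F) : bool := (x == 0) || (m <= v x).
Definition integral (x : F) : bool := in_pow 0 x.

(* F is a non-Archimedean local field with normalized discrete valuation v
   (v is only meaningful on nonzero elements; nu(0) = +oo is encoded by in_pow):
   v multiplicative, ultrametric, surjective onto Z (normalized), F complete
   w.r.t. v, and finite residue field O/p. *)
Definition is_nonarch_local_field : Prop :=
  [/\ (forall x y, x != 0 -> y != 0 -> v (x * y) = v x + v y),
      (forall x y, x != 0 -> y != 0 -> x + y != 0 ->
         Num.min (v x) (v y) <= v (x + y)),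
      (exists pi : F, pi != 0 /\ v pi = 1),
      (forall a : nat -> F,
         (forall N : int, exists M : nat, forall i j : nat,
            (M <= i)%N -> (M <= j)%N -> in_pow N (a i - a j)) ->
         exists L : F, forall N : int, exists M : nat, forall i : nat,
            (M <= i)%N -> in_pow N (a i - L))
    & (exists s : seq F, all integral s /\
         forall x, integral x -> exists2 y, y \in s & in_pow 1 (x - y))].

Definition residue_card (q : nat) : Prop :=
  exists s : seq F, [/\ size s = q, all integral s,
    (forall i j : nat, (i < q)%N -> (j < q)%N -> i != j ->
        ~~ in_pow 1 (nth 0 s i - nth 0 s j))
    & (forall x, integral x -> exists2 y, y \in s & in_pow 1 (x - y))].

(* xi = min(n, e) where e = nu(p) (e = +oo if p = 0 in F, i.e. char F = p). *)
Definition xi (p n : nat) : nat :=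
  if (p%:R : F) == 0 then n else minn n `|v p%:R|%N.

(* The Heisenberg matrix [[1, x, z], [0, I_k, y^T], [0, 0, 1]]. *)
Definition hei_mx (k : nat) (x y : 'rV[F]_k) (z : F) : 'M[F]_(1 + k + 1) :=
  col_mx (col_mx (row_mx (row_mx 1 x) z%:M)
                 (row_mx (row_mx 0 1%:M) y^T))
         (row_mx (row_mx 0 0) 1).

Definition in_HeiO (k : nat) (A : 'M[F]_(1 + k + 1)) : Prop :=
  exists (x y : 'rV[F]_k) (z : F),
    [/\ forall i, integral (x 0 i), forall i, integral (y 0 i), integral z
      & A = hei_mx x y z].

Definition congr_mod (m r : nat) (n : nat) (A B : 'M[F]_(m, r)) : Prop :=
  forall i j, in_pow n%:Z (A i j - B i j).

(* rho, restricted to Hei_{2k+1}(O), is a homomorphism into GL_d(C) whose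
   kernel is exactly the congruence subgroup mod p^n; equivalently rho induces
   a faithful d-dimensional complex representation of Hei_{2k+1}(O/p^n). *)
Definition faithful_rep_Hei_mod (k n d : nat)
    (rho : 'M[F]_(1 + k + 1) -> 'M[algC]_d) : Prop :=
  [/\ rho 1%:M = 1%:M,
      (forall A B, in_HeiO A -> in_HeiO B -> rho (A *m B) = rho A *m rho B)
    & (forall A B, in_HeiO A -> in_HeiO B ->
         (rho A = rho B <-> congr_mod n A B))].

End LocalField.
Arguments faithful_rep_Hei_mod {F} v k n {d} rho.

(* Main.v *)
Require Import Defs.
From HB Require Import structures.
From mathcomp Require Import all_boot all_order all_algebra all_field.
Import Order.TTheory GRing.Theory Num.Theory.
Local Open Scope ring_scope.

From mathcomp Require Import all_fingroup all_solvable all_character.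
From mathcomp Require Import ring zify.
From Stdlib Require Import ClassicalEpsilon.
Import Order.TTheory GRing.Theory Num.Theory.

Module A.
Set Implicit Arguments. Unset Strict Implicit. Unset Printing Implicit Defensive.
Local Open Scope ring_scope.
Set Implicit Arguments. Unset Strict Implicit. Unset Printing Implicit Defensive.
Local Open Scope ring_scope.

Section Val.
Variables (F : fieldType) (v : F -> int).
Hypothesis vM : forall x y : F, x != 0 -> y != 0 -> v (x * y) = v x + v y.
Hypothesis vU : forall x y : F, x != 0 -> y != 0 -> x + y != 0 ->
         Num.min (v x) (v y) <= v (x + y).

Local Notation ip := (in_pow v).
Set Default Proof Using "vM vU".

Lemma v1 : v 1 = 0.
Proof.
have := vM (oner_neq0 F) (oner_neq0 F); rewrite mulr1 => h.
by have := congr1 (fun t => t - v 1) h; rewrite subrr addrK.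
Qed.

Lemma vN1 : v (-1) = 0.
Proof.
have h : (-1 : F) != 0 by rewrite oppr_eq0 oner_neq0.
have := vM h h; rewrite mulrNN mulr1 v1 => /eqP; rewrite eq_sym.
by rewrite -mulr2n -mulr_natr mulf_eq0 /= => /orP[/eqP//|].
Qed.

Lemma vN x : x != 0 -> v (- x) = v x.
Proof.
move=> x0; have h : (-1 : F) != 0 by rewrite oppr_eq0 oner_neq0.
by rewrite -mulN1r vM // vN1 add0r.
Qed.

Lemma ip0 m : ip m 0.
Proof. by rewrite /in_pow eqxx. Qed.

Lemma ipN m x : ip m (- x) = ip m x.
Proof.
rewrite /in_pow oppr_eq0; case: eqP => //= /eqP x0; by rewrite vN.
Qed.

Lemma ipD m x y : ip m x -> ip m y -> ip m (x + y).
Proof.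
rewrite /in_pow; have [->|x0] := eqVneq x 0; first by rewrite add0r.
have [->|y0] := eqVneq y 0; first by rewrite addr0 (negPf x0).
have [->|s0] := eqVneq (x + y) 0; first by [].
rewrite /= => hx hy.
apply: le_trans (vU x0 y0 s0).
by rewrite /Num.min; case: ifP.
Qed.

Lemma ipB m x y : ip m x -> ip m y -> ip m (x - y).
Proof. by move=> hx hy; apply: ipD => //; rewrite ipN. Qed.

Lemma ipM a b x y : ip a x -> ip b y -> ip (a + b) (x * y).
Proof.
rewrite /in_pow; have [->|x0] := eqVneq x 0; first by rewrite mul0r eqxx.
have [->|y0] := eqVneq y 0; first by rewrite mulr0 eqxx.
rewrite mulf_eq0 (negPf x0) (negPf y0) /= vM // => ha hb.
exact: lerD.
Qed.

Lemma ip_le a b x : a <= b -> ip b x -> ip a x.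
Proof.
by rewrite /in_pow => ab /orP[->//|h]; rewrite (le_trans ab h) orbT.
Qed.

Lemma ip_sum m (I : Type) (r : seq I) (P : pred I) (G : I -> F) :
  (forall i, P i -> ip m (G i)) -> ip m (\sum_(i <- r | P i) G i).
Proof.
move=> h; elim/big_rec: _ => [|i x Pi hx]; first exact: ip0.
exact: ipD (h i Pi) hx.
Qed.

Lemma int1 : integral v 1.
Proof. by rewrite /integral /in_pow v1 lexx orbT. Qed.

Lemma int_nat (c : nat) : integral v (c%:R).
Proof.
elim: c => [|c ih]; first exact: ip0.
by rewrite mulrS; apply: ipD => //; exact: int1.
Qed.

Lemma ip_trans m x y z : ip m (x - y) -> ip m (y - z) -> ip m (x - z).
Proof. move=> h1 h2; have := ipD h1 h2; by rewrite addrA subrK. Qed.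

Lemma ip_sym m x y : ip m (x - y) -> ip m (y - x).
Proof. by rewrite -ipN opprB. Qed.

Variable pi : F.
Hypothesis pi0 : pi != 0.
Hypothesis vpi : v pi = 1.
Set Default Proof Using "vM vU pi0 vpi".

Lemma ip_div m x : ip (m + 1) x -> ip m (x / pi).
Proof.
rewrite /in_pow; have [->|x0] := eqVneq x 0; first by rewrite mul0r eqxx.
have pV : pi^-1 != 0 by rewrite invr_eq0.
rewrite mulf_eq0 (negPf x0) (negPf pV) /= vM //.
have : v (pi * pi^-1) = v pi + v pi^-1 by rewrite vM.
rewrite divff // v1 vpi => h.
have -> : v pi^-1 = -1 by rewrite -(addKr 1 (v pi^-1)) -h addr0.
by rewrite lerBrDr.
Qed.

Lemma ip_piX (m : nat) : ip m%:Z (pi ^+ m).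
Proof.
rewrite /in_pow; apply/orP; right.
elim: m => [|m ih]; first by rewrite expr0 v1.
rewrite exprS vM ?expf_neq0 // vpi.
by by rewrite -addn1 PoszD addrC lerD2l.
Qed.


Lemma ip_divX (k : int) (j : nat) x : ip (k + j%:Z) x -> ip k (x / pi ^+ j).
Proof.
elim: j k x => [|j ih] k x; first by rewrite expr0 divr1 addr0.
move=> h; rewrite exprSr invfM mulrA; apply: ip_div.
apply: ih; by rewrite -addrA -[(1 + j%:Z)]addrC -PoszD addn1.
Qed.

End Val.

Section Val2.
Variables (F : fieldType) (v : F -> int).
Hypothesis vM : forall x y : F, x != 0 -> y != 0 -> v (x * y) = v x + v y.
Hypothesis vU : forall x y : F, x != 0 -> y != 0 -> x + y != 0 ->
         Num.min (v x) (v y) <= v (x + y).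
Local Notation ip := (in_pow v).
Set Default Proof Using "vM vU".

Lemma ipX c (j : nat) : ip 1 c -> ip j%:Z (c ^+ j).
Proof.
move=> hc; elim: j => [|j ih]; first by rewrite expr0; exact: int1.
rewrite exprS -addn1 PoszD addrC; exact: ipM.
Qed.

Lemma ip_of_cong k x y : ip k x -> ip k (x - y) -> ip k y.
Proof. by move=> h1 h2; have := ipB vM vU h1 h2; rewrite opprB addrC subrK. Qed.

End Val2.

End A.
Import A.

Module B.
Set Implicit Arguments. Unset Strict Implicit. Unset Printing Implicit Defensive.
Local Open Scope ring_scope.
Set Implicit Arguments. Unset Strict Implicit. Unset Printing Implicit Defensive.
Local Open Scope ring_scope.

Section Quot.
Variables (F : fieldType) (v : F -> int).
Hypothesis vM : forall x y : F, x != 0 -> y != 0 -> v (x * y) = v x + v y.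
Hypothesis vU : forall x y : F, x != 0 -> y != 0 -> x + y != 0 ->
         Num.min (v x) (v y) <= v (x + y).
Variable pi : F.
Hypothesis pi0 : pi != 0.
Hypothesis vpi : v pi = 1.
Variable S : seq F.
Hypothesis Sint : all (integral v) S.
Hypothesis Scov : forall x, integral v x -> exists2 y, y \in S & in_pow v 1 (x - y).

Local Notation ip := (in_pow v).
Set Default Proof Using "vM vU pi0 vpi Sint Scov".
Local Notation integ := (integral v).

Fixpoint D (m : nat) : seq F :=
  if m is m'.+1 then [seq s + pi * r | s <- S, r <- D m'] else [:: 0].

Lemma D_int m : all integ (D m).
Proof.
elim: m => [|m ih] /=; first by rewrite andbT; exact: (ip0 vM vU).
apply/allP => _ /allpairsP[[s r] [/= hs hr ->]].
apply: (ipD vM vU) => //; first exact: (allP Sint).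
rewrite -[0]add0r; apply: (ipM vM vU) => //; last exact: (allP ih).
by rewrite /in_pow vpi orbT.
Qed.

Lemma D_size m : size (D m) = (size S ^ m)%N.
Proof. by elim: m => [|m ih] //=; rewrite size_allpairs ih expnS. Qed.

Lemma D_cov m x : integ x -> exists2 d, d \in D m & ip m%:Z (x - d).
Proof.
elim: m x => [|m ih] x xi; first by exists 0; rewrite ?inE // subr0.
have [s hs hxs] := Scov xi.
have hw : integ ((x - s) / pi) by apply: (ip_div vM vU) => //.
have [d hd hwd] := ih _ hw.
exists (s + pi * d); first by apply: allpairs_f.
have -> : x - (s + pi * d) = pi * ((x - s) / pi - d).
  by rewrite mulrBr mulrCA divff // mulr1 opprD addrA.
have -> : (m.+1)%:Z = 1 + m%:Z by rewrite -addn1 PoszD addrC.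
apply: (ipM vM vU) => //; by rewrite /in_pow vpi orbT.
Qed.

Section Level.
Variable m : nat.
Local Notation Dm := (D m).
Local Notation N := (size Dm).

Definition idx (x : F) := find (fun d => ip m%:Z (x - d)) Dm.

Lemma idx_lt x : integ x -> (idx x < N)%N.
Proof. move=> xi; have [d hd hxd] := D_cov m xi; rewrite -has_find; apply/hasP; by exists d. Qed.

Lemma idx_cong x y : ip m%:Z (x - y) -> idx x = idx y.
Proof.
move=> hxy; apply: eq_find => d /=; apply/idP/idP => h.
  by have := ip_trans vM vU (ip_sym vM vU hxy) h.
by have := ip_trans vM vU hxy h.
Qed.

Lemma nth_idx x : integ x -> ip m%:Z (x - nth 0 Dm (idx x)).
Proof.
move=> xi; have h : has (fun d => ip m%:Z (x - d)) Dm by rewrite has_find; exact: idx_lt.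
by have := nth_find 0 h.
Qed.

Definition Rpred (i : 'I_N.+1) := (i < N)%N && (idx (nth 0 Dm i) == i).
Definition R := {i : 'I_N.+1 | Rpred i}.

Lemma Rpred_idx x : integ x -> Rpred (inord (idx x)).
Proof.
move=> xi; have lt := idx_lt xi.
rewrite /Rpred inordK ?lt //=; last by apply: ltnW.
apply/eqP; apply: idx_cong; by have := ip_sym vM vU (nth_idx xi).
Qed.

Definition a0 : R := exist (fun i => Rpred i) _ (Rpred_idx (ip0 vM vU 0)).
Definition red (x : F) : R := insubd a0 (inord (idx x)).
Definition elem (a : R) : F := nth 0 Dm (val a).

Lemma elem_int a : integ (elem a).
Proof.
rewrite /elem; case: a => i /= /andP[hi _].
exact: (allP (D_int m)) _ (mem_nth 0 hi).
Qed.

Lemma val_red x : integ x -> val (val (red x)) = idx x.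
Proof.
move=> xi; rewrite /red insubdK; last exact: Rpred_idx.
by rewrite /= inordK //; apply: ltnW; exact: idx_lt.
Qed.

Lemma elem_red x : integ x -> ip m%:Z (x - elem (red x)).
Proof. by move=> xi; rewrite /elem val_red //; exact: nth_idx. Qed.

Lemma red_elem a : red (elem a) = a.
Proof.
apply: val_inj; apply: val_inj; rewrite val_red ?elem_int //.
by case: a => i hi; case/andP: (hi) => _ /eqP; rewrite /elem /=.
Qed.

Lemma red_cong x y : ip m%:Z (x - y) -> red x = red y.
Proof. by move=> h; rewrite /red (idx_cong h). Qed.

Lemma red_eqP x y : integ x -> integ y -> (red x = red y <-> ip m%:Z (x - y)).
Proof.
move=> xi yi; split; last exact: red_cong.
move=> e; have h1 := elem_red xi; have h2 := ip_sym vM vU (elem_red yi).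
by rewrite e in h1; have := ip_trans vM vU h1 h2.
Qed.

Lemma card_R : (#|{: R}| <= size S ^ m)%N.
Proof.
rewrite -D_size -[X in (_ <= X)%N]card_ord.
have f_inj : injective (fun a : R => Ordinal (proj1 (andP (valP a)))).
  by move=> a b /(congr1 val) /= /val_inj /val_inj.
exact: leq_card f_inj.
Qed.
End Level.
End Quot.

End B.
Import B.

Module G1.
Set Implicit Arguments. Unset Strict Implicit. Unset Printing Implicit Defensive.
Local Open Scope ring_scope.
Set Implicit Arguments. Unset Strict Implicit. Unset Printing Implicit Defensive.
Local Open Scope ring_scope.
Local Open Scope group_scope.

Lemma chars_sep (gT : finGroupType) (G : {group gT}) (p t : nat) :
  prime p -> p.-group G -> abelian G ->
  forall K : {group gT}, K \subset G -> (logn p #|K| <= t)%N ->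
  exists ch : nat -> Iirr G, forall x, x \in K ->
    (forall l, (l < t)%N -> 'chi_(ch l) x = 1%R) -> x = 1%g.
Proof.
move=> pp pG aG; elim: t => [|t ih] K sKG lK.
  exists (fun _ => 0) => x xK _.
  have pK : p.-group K := pgroupS sKG pG.
  have : #|K| = 1%N by rewrite (card_pgroup pK); move: lK; rewrite leqn0 => /eqP ->.
  move/eqP; rewrite -trivg_card1 => /eqP K1.
  by move: xK; rewrite K1 inE => /eqP.
have [K1|K1] := eqVneq K 1%G.
  by exists (fun _ => 0) => x; rewrite K1 inE => /eqP.
have [i Ki] : exists i : Iirr G, ~~ (K \subset cfker 'chi_i).
  apply/existsP; apply: contraT; rewrite negb_exists => /forallP h.
  have : K \subset \bigcap_i cfker 'chi[G]_i.
    by apply/bigcapsP => i _; move: (h i); rewrite negbK.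
  rewrite TI_cfker_irr => /trivgP KK; case/eqP: K1; exact: val_inj.
set K' := (K :&: cfker 'chi_i)%G.
have pK : p.-group K := pgroupS sKG pG.
have pK' : p.-group K' := pgroupS (subsetIl _ _) pK.
have prop : K' \proper K by rewrite properE subsetIl /= subsetI subxx /=.
have lK' : (logn p #|K'| <= t)%N.
  have h : (logn p #|K'| < logn p #|K|)%N.
    by rewrite -(ltn_exp2l _ _ (prime_gt1 pp)) -(card_pgroup pK) -(card_pgroup pK') proper_card.
  rewrite -ltnS; exact: leq_trans h lK.
have [ch hch] := ih K' (subset_trans (subsetIl _ _) sKG) lK'.
exists (fun l => if l is l'.+1 then ch l' else i) => x xK hx.
apply: hch => [|l lt]; last exact: (hx l.+1).
rewrite inE xK /= cfkerEirr inE.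
have lin : 'chi[G]_i \is a linear_char by move/char_abelianP: aG.
rewrite lin_char1 // (hx 0%N) //.
Qed.

End G1.
Import G1.

Module C.
Set Implicit Arguments. Unset Strict Implicit. Unset Printing Implicit Defensive.
Local Open Scope ring_scope.
Set Implicit Arguments. Unset Strict Implicit. Unset Printing Implicit Defensive.
Local Open Scope ring_scope.

Section Chars.
Variables (F : fieldType) (v : F -> int).
Hypothesis vM : forall x y : F, x != 0 -> y != 0 -> v (x * y) = v x + v y.
Hypothesis vU : forall x y : F, x != 0 -> y != 0 -> x + y != 0 ->
         Num.min (v x) (v y) <= v (x + y).
Variable pi : F.
Hypothesis pi0 : pi != 0.
Hypothesis vpi : v pi = 1.
Variable S : seq F.
Hypothesis Sint : all (integral v) S.
Hypothesis Scov : forall x, integral v x -> exists2 y, y \in S & in_pow v 1 (x - y).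

Local Notation ip := (in_pow v).
Local Notation integ := (integral v).
Set Default Proof Using "vM vU pi0 vpi Sint Scov".

Variable m : nat.
Local Notation R := (R v pi S m).
Local Notation red := (red vM vU pi0 vpi Sint Scov m).
Local Notation elem := (@elem F v pi S m).

Lemma elem_intR (a : R) : integ (elem a).
Proof. exact: elem_int. Qed.

Lemma redE x : integ x -> ip m%:Z (x - elem (red x)).
Proof. exact: elem_red. Qed.

Lemma red_elemR a : red (elem a) = a.
Proof. exact: red_elem. Qed.

Lemma red_eqR x y : integ x -> integ y -> (red x = red y <-> ip m%:Z (x - y)).
Proof. exact: red_eqP. Qed.

Lemma red_congR x y : ip m%:Z (x - y) -> red x = red y.
Proof. exact: red_cong. Qed.

Lemma int0 : integ 0.
Proof. exact: ip0. Qed.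

Lemma intN x : integ (- x) = integ x.
Proof. exact: ipN. Qed.

Lemma intD x y : integ x -> integ y -> integ (x + y).
Proof. exact: ipD. Qed.

Lemma intM x y : integ x -> integ y -> integ (x * y).
Proof. by move=> hx hy; have := ipM vM vU hx hy; rewrite addr0. Qed.

Lemma red_addl x y : integ x -> integ y -> red (elem (red x) + y) = red (x + y).
Proof.
move=> hx hy; apply: red_congR.
have -> : elem (red x) + y - (x + y) = - (x - elem (red x)) by rewrite opprB opprD addrACA subrr addr0.
by rewrite ipN; have := redE hx.
Qed.

Lemma red_addr x y : integ x -> integ y -> red (y + elem (red x)) = red (y + x).
Proof. by move=> hx hy; rewrite addrC red_addl // addrC. Qed.

Definition addR (a b : R) : R := red (elem a + elem b).

Lemma addRC a b : addR a b = addR b a.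
Proof. by rewrite /addR addrC. Qed.

Lemma addRA a b c : addR a (addR b c) = addR (addR a b) c.
Proof.
rewrite /addR red_addr ?intD ?elem_intR // red_addl ?intD ?elem_intR //.
by rewrite addrA.
Qed.

Lemma add0R a : addR (red 0) a = a.
Proof.
rewrite /addR red_addl ?elem_intR ?int0 //.
by rewrite (@add0r F (elem a)) red_elemR.
Qed.

Lemma addR_inj a : injective (addR a).
Proof.
move=> b c; rewrite /addR => /red_eqR h.
have : ip m%:Z (elem a + elem b - (elem a + elem c)) by apply: h; apply: intD; exact: elem_intR.
rewrite opprD addrACA subrr add0r => /red_congR.
by rewrite !red_elemR.
Qed.

Definition tr (a : R) : {perm R} := perm (@addR_inj a).

Lemma trE a b : tr a b = addR a b.
Proof. by rewrite permE. Qed.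

Lemma trM a b : (tr a * tr b)%g = tr (addR a b).
Proof.
apply/permP => c; rewrite permM !trE.
by rewrite addRA [addR b a]addRC.
Qed.

Lemma tr1 : tr (red 0) = 1%g.
Proof. by apply/permP => c; rewrite trE perm1 add0R. Qed.

Lemma tr_inj : injective tr.
Proof.
move=> a b e; have := congr1 (fun s : {perm R} => s (red 0)) e.
by rewrite !trE ![addR _ (red 0)]addRC !add0R.
Qed.

Definition Gset := [set tr a | a : R].

Lemma Ggroup : group_set Gset.
Proof.
apply/group_setP; split; first by apply/imsetP; exists (red 0); rewrite ?tr1.
move=> _ _ /imsetP[a _ ->] /imsetP[b _ ->]; rewrite trM.
by apply/imsetP; exists (addR a b).
Qed.

Definition G := Group Ggroup.

Lemma trG a : tr a \in G.
Proof. by apply/imsetP; exists a. Qed.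

Lemma G_abelian : abelian G.
Proof.
apply/centsP => _ /imsetP[a _ ->] _ /imsetP[b _ ->].
by rewrite /commute !trM addRC.
Qed.

Definition chi (i : Iirr G) (x : F) : algC := 'chi_i (tr (red x)).

Lemma chi_lin (i : Iirr G) : 'chi_i \is a linear_char.
Proof. by move/char_abelianP: G_abelian. Qed.

Lemma chiD i x y : integ x -> integ y -> chi i (x + y) = chi i x * chi i y.
Proof.
move=> hx hy; rewrite /chi -(lin_charM (chi_lin i)) ?trG // trM.
by rewrite /addR red_addl ?red_addr ?elem_intR.
Qed.

Lemma chi0 i : chi i 0 = 1.
Proof. by rewrite /chi tr1 lin_char1 // chi_lin. Qed.

Lemma chi_cong i x y : ip m%:Z (x - y) -> chi i x = chi i y.
Proof. by move=> h; rewrite /chi (red_congR h). Qed.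

Lemma chi_neq0 i x : integ x -> chi i x != 0.
Proof.
move=> hx; apply/negP => /eqP h.
have : chi i (x + - x) = 0 by rewrite chiD ?intN // h mul0r.
by rewrite subrr chi0 => /eqP; rewrite oner_eq0.
Qed.


Variables (p f : nat).
Hypothesis pp : prime p.
Hypothesis hp : ip 1 (p%:R : F).
Hypothesis hS : size S = (p ^ f)%N.
Set Default Proof Using "vM vU pi0 vpi Sint Scov pp hp hS".

Lemma trX a N : ((tr a) ^+ N)%g = tr (red (elem a *+ N)).
Proof.
elim: N => [|N ih]; first by rewrite expg0 mulr0n tr1.
rewrite expgS ih trM /addR red_addr ?elem_intR //; last first.
  by rewrite -mulr_natl; apply: intM; [exact: int_nat | exact: elem_intR].
by rewrite mulrS.
Qed.

Lemma G_pgroup : pgroup p G.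
Proof.
apply/pgroupP => r pr rG.
have [x xG ox] := Cauchy pr rG.
case/imsetP: xG => a _ xa.
have : ((tr a) ^+ (p ^ m))%g = 1%g.
  rewrite trX -tr1; congr tr; apply: red_congR; rewrite subr0 -mulr_natl natrX.
  have := ipM vM vU (ipX vM vU m hp) (elem_intR a); by rewrite addr0.
move/eqP; rewrite -order_dvdn -xa ox.
by rewrite Euclid_dvdX // dvdn_prime2 // => /andP[/eqP -> _]; rewrite inE.
Qed.

Definition Eset := [set tr a | a : R & ip (m.-1)%:Z (elem a)].

Lemma Egroup : group_set Eset.
Proof.
have lem : ((m.-1)%:Z <= m%:Z) by rewrite lez_nat leq_pred.
apply/group_setP; split.
  apply/imsetP; exists (red 0); last by rewrite tr1.
  rewrite inE; have h := redE int0; rewrite sub0r (ipN vM vU) in h.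
  by have := ip_le vM vU lem h.
move=> _ _ /imsetP[a ha ->] /imsetP[b hb ->]; rewrite trM.
apply/imsetP; exists (addR a b) => //; rewrite inE.
rewrite inE in ha; rewrite inE in hb.
have hab := ipD vM vU ha hb.
have h : ip (m.-1)%:Z (elem a + elem b - elem (addR a b)).
  by have := ip_le vM vU lem (redE (intD (elem_intR a) (elem_intR b))).
by have := ip_of_cong vM vU hab h.
Qed.

Definition E := Group Egroup.

Lemma card_E : (0 < m)%N -> (#|E| <= p ^ f)%N.
Proof.
move=> m0; rewrite -hS.
pose g (j : 'I_(size S)) := tr (red (pi ^+ m.-1 * nth 0 S j)).
apply: (@leq_trans #|[set g j | j : 'I_(size S)]|); last first.
  by apply: leq_trans (leq_imset_card _ _) _; rewrite card_ord.
apply: subset_leq_card; apply/subsetP => _ /imsetP[a ha ->].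
rewrite inE in ha.
set c := elem a / pi ^+ m.-1.
have pX : pi ^+ m.-1 != 0 by rewrite expf_neq0.
have hc : integ c by apply: (ip_divX vM vU pi0 vpi); rewrite add0r.
have [s hs hcs] := Scov hc.
have hi : (index s S < size S)%N by rewrite index_mem.
apply/imsetP; exists (Ordinal hi : 'I_(size S)) => //.
rewrite /g /= nth_index // -[a in LHS]red_elemR; congr tr; apply: red_congR.
have -> : elem a - pi ^+ m.-1 * s = pi ^+ m.-1 * (c - s).
  by rewrite mulrBr /c [pi ^+ m.-1 * (_ / _)]mulrC divfK.
have := ipM vM vU (ip_piX vM vU pi0 vpi m.-1) hcs.
by rewrite -PoszD addn1 prednK.
Qed.

Lemma level_chars : (0 < m)%N -> exists ch : nat -> Iirr G,
  forall a : R, ip (m.-1)%:Z (elem a) ->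
    (forall l, (l < f)%N -> chi (ch l) (elem a) = 1) -> a = red 0.
Proof.
move=> m0.
have sEG : E \subset G by apply/subsetP => _ /imsetP[a _ ->]; exact: trG.
have lE : (logn p #|E| <= f)%N.
  have pE : pgroup p E := pgroupS sEG G_pgroup.
  by rewrite -(leq_exp2l _ _ (prime_gt1 pp)) -(card_pgroup pE) card_E.
have [ch hch] := chars_sep pp G_pgroup G_abelian sEG lE.
exists ch => a ha hl; apply: tr_inj; rewrite tr1; apply: hch.
  by apply/imsetP; exists a; rewrite ?inE.
by move=> l lt; have := hl l lt; rewrite /chi red_elemR.
Qed.

End Chars.

End C.
Import C.

Module D.
Set Implicit Arguments. Unset Strict Implicit. Unset Printing Implicit Defensive.
Local Open Scope ring_scope.
Set Implicit Arguments. Unset Strict Implicit. Unset Printing Implicit Defensive.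
Local Open Scope ring_scope.

Section Hei.
Variables (F : fieldType) (k : nat).
Local Notation hei := (@hei_mx F k).

Lemma hei_mul x y z x' y' z' :
  hei x y z *m hei x' y' z' = hei (x + x') (y + y') (z + z' + (x *m y'^T) 0 0).
Proof.
rewrite /hei_mx !mul_col_mx !mul_row_col !mul_mx_row !mul0mx !mul1mx !mulmx0 !mulmx1.
rewrite !add_row_mx !addr0 !add0r.
congr (col_mx (col_mx (row_mx (row_mx _ _) _) (row_mx _ _)) _).
- by rewrite addrC.
- by rewrite {1}[x *m _]mx11_scalar -!raddfD /= addrC addrA.
- by rewrite linearD /= addrC.
Qed.

Ltac splitI i := rewrite -(splitK i); case: (split i) => {i} i /=.

Lemma hei_congr (P : F -> Prop) (x y : 'rV[F]_k) z (x' y' : 'rV[F]_k) z' : P 0 ->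
  (forall j, P (x 0 j - x' 0 j)) -> (forall j, P (y 0 j - y' 0 j)) -> P (z - z') ->
  forall i j, P (hei x y z i j - hei x' y' z' i j).
Proof.
move=> P0 Px Py Pz i j; rewrite /hei_mx.
splitI i; [splitI i|]; splitI j; try splitI j;
  rewrite ?col_mxEu ?col_mxEd ?row_mxEl ?row_mxEr ?subrr //; rewrite ?mxE ?subrr //.
- by rewrite (ord1 i).
- by rewrite (ord1 i) (ord1 j) eqxx !mulr1n.
- by rewrite (ord1 j).
Qed.

Lemma hei1 : hei 0 0 0 = 1%:M.
Proof.
apply/matrixP => i j; rewrite /hei_mx.
splitI i; [splitI i|]; splitI j; try splitI j;
  rewrite ?col_mxEu ?col_mxEd ?row_mxEl ?row_mxEr !mxE ?eq_lshift ?eq_rshift ?eq_lrshift ?eq_rlshift //.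
all: try by rewrite !ord1.
Qed.

Definition r0 : 'I_(1 + k + 1) := lshift 1 (lshift k ord0).
Definition cj (j : 'I_k) : 'I_(1 + k + 1) := lshift 1 (rshift 1 j).
Definition cl : 'I_(1 + k + 1) := rshift (1 + k) ord0.

Definition Xof (A : 'M[F]_(1 + k + 1)) : 'rV[F]_k := \row_j A r0 (cj j).
Definition Yof (A : 'M[F]_(1 + k + 1)) : 'rV[F]_k := \row_j A (cj j) cl.
Definition Zof (A : 'M[F]_(1 + k + 1)) : F := A r0 cl.

Lemma Xof_hei x y z : Xof (hei x y z) = x.
Proof.
apply/matrixP => i j; rewrite (ord1 i) mxE /hei_mx /r0 /cj.
by rewrite col_mxEu col_mxEu row_mxEl row_mxEr.
Qed.

Lemma Yof_hei x y z : Yof (hei x y z) = y.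
Proof.
apply/matrixP => i j; rewrite (ord1 i) mxE /hei_mx /cl /cj.
by rewrite col_mxEu col_mxEd row_mxEr mxE.
Qed.

Lemma Zof_hei x y z : Zof (hei x y z) = z.
Proof.
by rewrite /Zof /hei_mx /r0 /cl col_mxEu col_mxEu row_mxEr mxE eqxx mulr1n.
Qed.

End Hei.

End D.
Import D.

Module E.
Set Implicit Arguments. Unset Strict Implicit. Unset Printing Implicit Defensive.
Local Open Scope ring_scope.
Set Implicit Arguments. Unset Strict Implicit. Unset Printing Implicit Defensive.
Local Open Scope ring_scope.

Section LevelRep.
Variables (F : fieldType) (v : F -> int).
Hypothesis vM : forall x y : F, x != 0 -> y != 0 -> v (x * y) = v x + v y.
Hypothesis vU : forall x y : F, x != 0 -> y != 0 -> x + y != 0 ->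
         Num.min (v x) (v y) <= v (x + y).
Variable pi : F.
Hypothesis pi0 : pi != 0.
Hypothesis vpi : v pi = 1.
Variable S : seq F.
Hypothesis Sint : all (integral v) S.
Hypothesis Scov : forall x, integral v x -> exists2 y, y \in S & in_pow v 1 (x - y).

Local Notation ip := (in_pow v).
Local Notation integ := (integral v).
Set Default Proof Using "vM vU pi0 vpi Sint Scov".

Variables (k m : nat).
Local Notation R := (R v pi S m).
Local Notation red := (red vM vU pi0 vpi Sint Scov m).
Local Notation elem := (@elem F v pi S m).
Variable i : Iirr (G vM vU pi0 vpi Sint Scov m).
Local Notation ch := (chi i).
Local Notation intD := (C.intD vM vU pi0 vpi Sint Scov).
Local Notation intM := (C.intM vM vU pi0 vpi Sint Scov).
Local Notation intN := (C.intN vM vU pi0 vpi Sint Scov).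
Local Notation int0 := (C.int0 vM vU pi0 vpi Sint Scov).
Local Notation elem_intR := (C.elem_intR vM vU pi0 vpi Sint Scov).
Local Notation redE := (C.redE vM vU pi0 vpi Sint Scov m).
Local Notation red_addl := (C.red_addl vM vU pi0 vpi Sint Scov m).
Local Notation red_addr := (C.red_addr vM vU pi0 vpi Sint Scov m).
Local Notation red_congR := (C.red_congR vM vU pi0 vpi Sint Scov (m:=m)).
Local Notation red_eqR := (C.red_eqR vM vU pi0 vpi Sint Scov m).
Local Notation red_elemR := (C.red_elemR vM vU pi0 vpi Sint Scov (m:=m)).

Definition I := {ffun 'I_k -> R}.
Definition intv (x : 'rV[F]_k) := forall j, integ (x 0 j).

Definition shift (u : I) (x : 'rV[F]_k) : I := [ffun j => red (elem (u j) + x 0 j)].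
Definition phase (u : I) (y : 'rV[F]_k) (z : F) : algC :=
  ch (z + \sum_j elem (u j) * y 0 j).
Definition Mrep (x y : 'rV[F]_k) (z : F) : 'M[algC]_#|{: I}| :=
  \matrix_(a, b) (if (enum_val b : I) == shift (enum_val a) x
                  then phase (enum_val a) y z else 0).

Lemma int_sum (J : Type) (r : seq J) (P : pred J) (g : J -> F) :
  (forall j, P j -> integ (g j)) -> integ (\sum_(j <- r | P j) g j).
Proof. exact: ip_sum. Qed.

Lemma ip_sumB (J : Type) (r : seq J) (P : pred J) (g h : J -> F) :
  (forall j, P j -> ip m%:Z (g j - h j)) ->
  ip m%:Z (\sum_(j <- r | P j) g j - \sum_(j <- r | P j) h j).
Proof. by move=> H; rewrite -sumrB; apply: (ip_sum vM vU). Qed.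

Lemma int_phase_arg (u : I) y z : intv y -> integ z ->
  integ (z + \sum_j elem (u j) * y 0 j).
Proof.
move=> hy hz; apply: intD => //; apply: int_sum => j _.
apply: intM => //; exact: elem_intR.
Qed.

Lemma shift_shift u x x' : intv x -> intv x' ->
  shift (shift u x) x' = shift u (x + x').
Proof.
move=> hx hx'; apply/ffunP => j; rewrite !ffunE red_addl //.
  by rewrite mxE addrA.
by apply: intD => //; exact: elem_intR.
Qed.

Lemma phase_mul u x y z x' y' z' : intv x -> intv y -> integ z ->
  intv x' -> intv y' -> integ z' ->
  phase u y z * phase (shift u x) y' z' =
  phase u (y + y') (z + z' + \sum_j x 0 j * y' 0 j).
Proof.
move=> hx hy hz hx' hy' hz'; rewrite /phase -chiD; last first.
- exact: int_phase_arg.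
- exact: int_phase_arg.
apply: chi_cong.
set w := fun j => elem (shift u x j).
have eS1 : \sum_j elem (u j) * (y + y') 0 j =
    \sum_j elem (u j) * y 0 j + \sum_j elem (u j) * y' 0 j.
  by rewrite -big_split; apply: eq_bigr => j _; rewrite mxE mulrDr.
have eS2 : \sum_j (w j - (elem (u j) + x 0 j)) * y' 0 j =
   \sum_j w j * y' 0 j - \sum_j x 0 j * y' 0 j - \sum_j elem (u j) * y' 0 j.
  rewrite -!sumrB; apply: eq_bigr => j _; ring.
have -> : z + \sum_j elem (u j) * y 0 j + (z' + \sum_j elem (shift u x j) * y' 0 j)
   - (z + z' + \sum_j x 0 j * y' 0 j + \sum_j elem (u j) * (y + y') 0 j) =
   \sum_j (w j - (elem (u j) + x 0 j)) * y' 0 j.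
  rewrite eS1 eS2 /w; ring.
apply: (ip_sum vM vU) => j _.
have := ipM vM vU (a := m%:Z) (b := 0) (x := w j - (elem (u j) + x 0 j)) (y := y' 0 j).
rewrite addr0; apply => //.
rewrite /w ffunE -(ipN vM vU) opprB.
by have := redE (intD (elem_intR (u j)) (hx j)).
all: exact: hy'.
Qed.


Lemma Mrep_mul x y z x' y' z' : intv x -> intv y -> integ z ->
  intv x' -> intv y' -> integ z' ->
  Mrep x y z *m Mrep x' y' z' =
  Mrep (x + x') (y + y') (z + z' + \sum_j x 0 j * y' 0 j).
Proof.
move=> hx hy hz hx' hy' hz'; apply/matrixP => a b; rewrite !mxE.
set ua := (enum_val a : I).
pose c0 := enum_rank (shift ua x).
rewrite (bigD1 c0) //= big1 => [|c ne]; last first.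
  rewrite !mxE; case: eqP => [e|_]; last by rewrite mul0r.
  by case/eqP: ne; rewrite /c0 -e enum_valK.
rewrite !mxE /c0 enum_rankK eqxx shift_shift //.
case: eqP => _; last by rewrite mulr0 addr0.
by rewrite addr0 (@phase_mul ua x y z x' y' z' hx hy hz hx' hy' hz').
Qed.

Lemma Mrep0 : Mrep 0 0 0 = 1%:M.
Proof.
apply/matrixP => a b; rewrite !mxE.
have -> : shift (enum_val a) 0 = enum_val a.
  by apply/ffunP => j; rewrite ffunE mxE addr0 red_elemR.
rewrite (inj_eq enum_val_inj) eq_sym.
case: eqP => _ //; rewrite /phase.
rewrite big1 ?addr0 ?chi0 //.
by move=> j _; rewrite mxE mulr0.
Qed.

Lemma Mrep_cong (x y : 'rV[F]_k) z (x' y' : 'rV[F]_k) z' : intv y ->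
  (forall j, ip m%:Z (x 0 j - x' 0 j)) -> (forall j, ip m%:Z (y 0 j - y' 0 j)) ->
  ip m%:Z (z - z') -> Mrep x y z = Mrep x' y' z'.
Proof.
move=> hy hx hyy hz; apply/matrixP => a b; rewrite !mxE.
have -> : shift (enum_val a) x = shift (enum_val a) x'.
  apply/ffunP => j; rewrite !ffunE; apply: red_congR.
  by rewrite opprD addrACA subrr add0r.
case: eqP => // _; rewrite /phase; apply: chi_cong.
have -> : z + \sum_j elem (enum_val a j) * y 0 j - (z' + \sum_j elem (enum_val a j) * y' 0 j)
  = (z - z') + (\sum_j elem (enum_val a j) * y 0 j - \sum_j elem (enum_val a j) * y' 0 j).
  by rewrite opprD addrACA.
apply: (ipD vM vU) => //; apply: ip_sumB => j _; rewrite -mulrBr.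
have := ipM vM vU (elem_intR (enum_val a j)) (hyy j); by rewrite add0r.
Qed.

Lemma Mrep_data x y z x' y' z' : intv y -> integ z ->
  Mrep x y z = Mrep x' y' z' ->
  forall u, shift u x = shift u x' /\ phase u y z = phase u y' z'.
Proof.
move=> hy hz e u.
have := congr1 (fun M : 'M[algC]_#|{: I}| => M (enum_rank u) (enum_rank (shift u x))) e.
rewrite !mxE !enum_rankK eqxx.
case: eqP => [-> -> //|_ h].
by move: (chi_neq0 i (int_phase_arg u hy hz)); rewrite -/(phase u y z) h eqxx.
Qed.

End LevelRep.

End E.
Import E.

Module Fc.
Set Implicit Arguments. Unset Strict Implicit. Unset Printing Implicit Defensive.
Local Open Scope ring_scope.
Set Implicit Arguments. Unset Strict Implicit. Unset Printing Implicit Defensive.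
Local Open Scope ring_scope.

Section Comb.
Variables (F : fieldType) (v : F -> int) (k n : nat).
Local Notation Mat := ('M[F]_(1 + k + 1)).

Definition goodrep d (rho : Mat -> 'M[algC]_d) :=
  [/\ rho 1%:M = 1%:M,
      (forall A B, in_HeiO v A -> in_HeiO v B -> rho (A *m B) = rho A *m rho B)
    & (forall A B, in_HeiO v A -> in_HeiO v B -> congr_mod v n A B -> rho A = rho B)].

Lemma good_block d1 d2 (r1 : Mat -> 'M[algC]_d1) (r2 : Mat -> 'M[algC]_d2) :
  goodrep r1 -> goodrep r2 -> goodrep (fun A => block_mx (r1 A) 0 0 (r2 A)).
Proof.
case=> h1 m1 c1 [h2 m2 c2]; split.
- by rewrite h1 h2 -scalar_mx_block.
- move=> A B hA hB; rewrite m1 // m2 // mulmx_block.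
  by rewrite !mulmx0 !mul0mx !addr0 !add0r.
- by move=> A B hA hB hc; rewrite (c1 A B) // (c2 A B).
Qed.

Lemma good_one d : goodrep (fun _ : Mat => (1%:M : 'M[algC]_d)).
Proof. by split => // A B _ _; rewrite mulmx1. Qed.

Lemma block_eq d1 d2 (a a' : 'M[algC]_d1) (b b' : 'M[algC]_d2) :
  block_mx a 0 0 b = block_mx a' 0 0 b' -> a = a' /\ b = b'.
Proof. by move/eq_block_mx => [-> _ _ ->]. Qed.

Lemma comb (J : seq (nat * nat)) (dim : nat * nat -> nat)
  (rho : forall t, Mat -> 'M[algC]_(dim t)) :
  (forall t, goodrep (rho t)) ->
  exists Rr : Mat -> 'M[algC]_(\sum_(t <- J) dim t), goodrep Rr /\
    forall A B, Rr A = Rr B -> forall t, t \in J -> rho t A = rho t B.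
Proof.
move=> hg; elim: J => [|t J [Rr [gR hR]]].
  rewrite big_nil; exists (fun _ => 1%:M); split; first exact: good_one.
  by move=> A B _ t; rewrite in_nil.
rewrite big_cons; exists (fun A => block_mx (rho t A) 0 0 (Rr A)); split.
  exact: good_block.
move=> A B /block_eq [e1 e2] t'; rewrite in_cons => /orP[/eqP ->//|ht].
exact: hR.
Qed.

Lemma pad d0 d (rho : Mat -> 'M[algC]_d0) : (d0 <= d)%N -> goodrep rho ->
  (forall A B, in_HeiO v A -> in_HeiO v B -> rho A = rho B -> congr_mod v n A B) ->
  exists rho' : Mat -> 'M[algC]_d, faithful_rep_Hei_mod v k n rho'.
Proof.
move=> le g hf; rewrite -(subnKC le).
have [h1 hm hc] := good_block g (good_one (d - d0)).
exists (fun A => block_mx (rho A) 0 0 1%:M); split => // A B hA hB; split.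
  by move/block_eq => [e _]; exact: hf.
exact: hc.
Qed.
End Comb.

End Fc.
Import Fc.

Module H.
Set Implicit Arguments. Unset Strict Implicit. Unset Printing Implicit Defensive.
Local Open Scope ring_scope.
Set Implicit Arguments. Unset Strict Implicit. Unset Printing Implicit Defensive.
Local Open Scope ring_scope.

Section LevelGood.
Variables (F : fieldType) (v : F -> int).
Hypothesis vM : forall x y : F, x != 0 -> y != 0 -> v (x * y) = v x + v y.
Hypothesis vU : forall x y : F, x != 0 -> y != 0 -> x + y != 0 ->
         Num.min (v x) (v y) <= v (x + y).
Variable pi : F.
Hypothesis pi0 : pi != 0.
Hypothesis vpi : v pi = 1.
Variable S : seq F.
Hypothesis Sint : all (integral v) S.
Hypothesis Scov : forall x, integral v x -> exists2 y, y \in S & in_pow v 1 (x - y).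

Local Notation ip := (in_pow v).
Local Notation integ := (integral v).
Set Default Proof Using "vM vU pi0 vpi Sint Scov".

Variables (k m n : nat).
Hypothesis mn : (m <= n)%N.
Local Notation R := (R v pi S m).
Local Notation red := (red vM vU pi0 vpi Sint Scov m).
Local Notation elem := (@elem F v pi S m).
Variable i : Iirr (G vM vU pi0 vpi Sint Scov m).
Local Notation ch := (chi i).
Local Notation intD := (C.intD vM vU pi0 vpi Sint Scov).
Local Notation intM := (C.intM vM vU pi0 vpi Sint Scov).
Local Notation intN := (C.intN vM vU pi0 vpi Sint Scov).
Local Notation int0 := (C.int0 vM vU pi0 vpi Sint Scov).
Local Notation elem_intR := (C.elem_intR vM vU pi0 vpi Sint Scov).
Local Notation redE := (C.redE vM vU pi0 vpi Sint Scov m).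
Local Notation red_addl := (C.red_addl vM vU pi0 vpi Sint Scov m).
Local Notation red_congR := (C.red_congR vM vU pi0 vpi Sint Scov (m:=m)).
Local Notation red_eqR := (C.red_eqR vM vU pi0 vpi Sint Scov m).
Local Notation red_elemR := (C.red_elemR vM vU pi0 vpi Sint Scov (m:=m)).
Local Notation Mat := ('M[F]_(1 + k + 1)).

Definition lrho (A : Mat) := Mrep i (Xof A) (Yof A) (Zof A).

Lemma mul_tr_00 (x y : 'rV[F]_k) : (x *m y^T) 0 0 = \sum_j x 0 j * y 0 j.
Proof. by rewrite mxE; apply: eq_bigr => j _; rewrite mxE. Qed.

Lemma lrho_good : goodrep v n lrho.
Proof using vM vU pi0 vpi Sint Scov mn.
split.
- by rewrite /lrho -hei1 Xof_hei Yof_hei Zof_hei Mrep0.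
- move=> A B [x [y [z [hx hy hz ->]]]] [x' [y' [z' [hx' hy' hz' ->]]]].
  rewrite /lrho hei_mul !Xof_hei !Yof_hei !Zof_hei mul_tr_00.
  by rewrite Mrep_mul.
- move=> A B [x [y [z [hx hy hz ->]]]] [x' [y' [z' [hx' hy' hz' ->]]]] hc.
  rewrite /lrho !Xof_hei !Yof_hei !Zof_hei.
  have le : (m%:Z <= n%:Z) by rewrite lez_nat.
  apply: Mrep_cong => // [j|j|].
  + have := hc (r0 k) (cj j); rewrite /hei_mx /r0 /cj !col_mxEu !row_mxEl !row_mxEr.
    exact: (ip_le vM vU le).
  + have := hc (cj j) (cl k); rewrite /hei_mx /cl /cj !col_mxEu !col_mxEd !row_mxEr !mxE.
    exact: (ip_le vM vU le).
  + have := hc (r0 k) (cl k); rewrite /hei_mx /cl /r0 !col_mxEu !row_mxEr !mxE eqxx !mulr1n.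
    exact: (ip_le vM vU le).
Qed.


Lemma chi_eq1 a b : integ a -> integ b -> ch a = ch b -> ch (a - b) = 1.
Proof.
move=> ha hb e.
have hab : integ (a - b) by apply: intD; rewrite ?intN.
have : ch a = ch (a - b) * ch b by rewrite -chiD // subrK.
rewrite e -{1}[ch b]mul1r => /mulIf h; symmetry; apply: h.
exact: chi_neq0.
Qed.

Lemma phase_approx (u : {ffun 'I_k -> R}) (y : 'rV[F]_k) z (c : 'I_k -> F) :
  intv v y -> (forall j, ip m%:Z (elem (u j) - c j)) ->
  phase i u y z = ch (z + \sum_j c j * y 0 j).
Proof.
move=> hy hc; rewrite /phase; apply: chi_cong.
rewrite opprD addrACA subrr add0r; apply: (ip_sumB vM vU pi0 vpi Sint Scov) => j _.
rewrite -mulrBl; have := ipM vM vU (hc j) (hy j); by rewrite addr0.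
Qed.

Lemma lrho_data (x y : 'rV[F]_k) z (x' y' : 'rV[F]_k) z' :
  intv v x -> intv v y -> integ z -> intv v x' -> intv v y' -> integ z' ->
  lrho (hei_mx x y z) = lrho (hei_mx x' y' z') ->
  [/\ forall j, ip m%:Z (x 0 j - x' 0 j), ch (z - z') = 1
    & forall j, ch (y 0 j - y' 0 j) = 1].
Proof.
move=> hx hy hz hx' hy' hz'; rewrite /lrho !Xof_hei !Yof_hei !Zof_hei => e.
have D := Mrep_data hy hz e.
pose u0 : {ffun 'I_k -> R} := [ffun _ => red 0].
have e0 : forall j, ip m%:Z (elem (u0 j) - 0).
  by move=> j; rewrite ffunE subr0 -(ipN vM vU); have := redE int0; rewrite sub0r.
have hzz : ch z = ch z'.
  have [_ p0] := D u0.
  rewrite (phase_approx z hy e0) (phase_approx z' hy' e0) in p0.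
  by rewrite !big1 ?addr0 // in p0 => j _; rewrite mul0r.
split.
- move=> j; have [s _] := D u0.
  have := congr1 (fun f : {ffun 'I_k -> R} => f j) s; rewrite !ffunE.
  rewrite !red_addl ?int0 // !add0r => h; exact: (proj1 (red_eqR (hx j) (hx' j)) h).
- exact: chi_eq1.
- move=> l.
  pose c (j : 'I_k) : F := if j == l then 1 else 0.
  have ic : forall j, integ (c j) by move=> j; rewrite /c; case: ifP => _; [exact: int1|exact: int0].
  pose ul : {ffun 'I_k -> R} := [ffun j => red (c j)].
  have el : forall j, ip m%:Z (elem (ul j) - c j).
    by move=> j; rewrite ffunE -(ipN vM vU) opprB; have := redE (ic j).
  have sc : forall w : 'rV[F]_k, \sum_j c j * w 0 j = w 0 l.
    move=> w; rewrite (bigD1 l) //= /c eqxx mul1r big1 ?addr0 //.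
    by move=> j /negPf ->; rewrite mul0r.
  have [_ pl] := D ul.
  rewrite (phase_approx z hy el) (phase_approx z' hy' el) !sc !chiD // -hzz in pl.
  apply: chi_eq1 => //; apply: (mulfI _ pl); exact: chi_neq0.
Qed.

End LevelGood.

End H.
Import H.

Module K.
Set Implicit Arguments. Unset Strict Implicit. Unset Printing Implicit Defensive.
Local Open Scope ring_scope.
Set Implicit Arguments. Unset Strict Implicit. Unset Printing Implicit Defensive.
Local Open Scope ring_scope.

Section Kern.
Variables (F : fieldType) (v : F -> int).
Hypothesis vM : forall x y : F, x != 0 -> y != 0 -> v (x * y) = v x + v y.
Hypothesis vU : forall x y : F, x != 0 -> y != 0 -> x + y != 0 ->
         Num.min (v x) (v y) <= v (x + y).
Variable pi : F.
Hypothesis pi0 : pi != 0.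
Hypothesis vpi : v pi = 1.
Variable S : seq F.
Hypothesis Sint : all (integral v) S.
Hypothesis Scov : forall x, integral v x -> exists2 y, y \in S & in_pow v 1 (x - y).

Local Notation ip := (in_pow v).
Local Notation integ := (integral v).
Local Notation intM := (C.intM vM vU pi0 vpi Sint Scov).
Local Notation intD := (C.intD vM vU pi0 vpi Sint Scov).
Local Notation int0 := (C.int0 vM vU pi0 vpi Sint Scov).
Local Notation redE := (C.redE vM vU pi0 vpi Sint Scov).
Local Notation red_eqR := (C.red_eqR vM vU pi0 vpi Sint Scov).
Local Notation red := (B.red vM vU pi0 vpi Sint Scov).

Variables (p f n xi : nat).
Hypothesis hp : ip 1 (p%:R : F).
Hypothesis Hxi : forall b, integ b -> ip n%:Z (p%:R * b) -> ip (n - xi)%N%:Z b.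
Variable chf : forall m, nat -> Iirr (G vM vU pi0 vpi Sint Scov m).
Hypothesis hchf : forall m, (0 < m)%N -> forall a : R v pi S m,
  ip (m.-1)%:Z (elem a) -> (forall l, (l < f)%N -> chi (chf m l) (elem a) = 1) ->
  a = red m 0.

Lemma chi_natmul m (i : Iirr (G vM vU pi0 vpi Sint Scov m)) w N : integ w ->
  chi i (w *+ N) = chi i w ^+ N.
Proof.
move=> hw; elim: N => [|N ih]; first by rewrite mulr0n expr0 chi0.
rewrite mulrS chiD // ?ih ?exprS //.
by rewrite -mulr_natl; apply: intM => //; exact: (int_nat vM vU).
Qed.

Lemma kernel w : integ w ->
  (forall m, (n - xi < m)%N -> (m <= n)%N -> forall l, (l < f)%N -> chi (chf m l) w = 1) ->
  ip n%:Z w.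
Proof.
move=> hw H; apply/negPn/negP => nw.
have exP : exists r, ip n%:Z ((p%:R)^+r * w).
  by exists n; have := ipM vM vU (ipX vM vU n hp) hw; rewrite addr0.
case: (ex_minnP exP) => r1 Pr1 minr1.
have r1pos : (0 < r1)%N.
  by case: r1 Pr1 minr1 => // Pr1 _; move: Pr1; rewrite expr0 mul1r (negPf nw).
set r := r1.-1.
set b := (p%:R)^+r * w.
have nb : ~~ ip n%:Z b.
  apply/negP => hb; have := minr1 r hb; by rewrite /r leqNgt ltn_predL r1pos.
have ib : integ b.
  apply: intM => //. rewrite -natrX. exact: (int_nat vM vU (p ^ r)).
have hpb : ip n%:Z (p%:R * b) by rewrite /b mulrA -exprS /r prednK.
have hb := Hxi ib hpb.
have exQ : exists j, ~~ ip j%:Z b by exists n.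
case: (ex_minnP exQ) => m nm minm.
have mn : (m <= n)%N := minm n nb.
have m0 : (0 < m)%N.
  case: m nm minm mn => // nm _ _; move: ib; rewrite /integral => ib; by rewrite ib in nm.
have mxi : (n - xi < m)%N.
  rewrite ltnNge; apply/negP => le; move/negP: nm; apply.
  have := ip_le vM vU (a := m%:Z) (b := (n - xi)%N%:Z) (x := b); rewrite lez_nat; exact.
have hm1 : ip (m.-1)%:Z b.
  apply/negPn/negP => h; have := minm _ h; by rewrite leqNgt ltn_predL m0.
set a := red m b.
have hea : ip m%:Z (b - elem a) := redE m ib.
have lem : ((m.-1)%:Z <= m%:Z) by rewrite lez_nat leq_pred.
have ha : ip (m.-1)%:Z (elem a).
  have h1 := ip_le vM vU lem hea; by have := ip_of_cong vM vU hm1 h1.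
have chb : forall l, (l < f)%N -> chi (chf m l) (elem a) = 1.
  move=> l lf; have -> : chi (chf m l) (elem a) = chi (chf m l) b.
    by apply: chi_cong; have := ip_sym vM vU hea.
  rewrite /b -natrX mulr_natl chi_natmul // H // expr1n //.
have e := hchf m0 ha chb.
have := proj1 (red_eqR m ib int0) e; rewrite subr0 => h.
by rewrite h in nm.
Qed.

End Kern.

End K.
Import K.

Unset Implicit Arguments. Set Strict Implicit.
Theorem lemma4p7 (F : fieldType) (v : F -> int) (p f q : nat) :
  is_nonarch_local_field v ->
  prime p -> in_pow v 1 (p%:R : F) ->
  residue_card v q -> q = (p ^ f)%N ->
  forall k n : nat, (1 <= k)%N -> (1 <= n)%N ->
  exists rho : 'M[F]_(1 + k + 1) ->
               'M[algC]_(\sum_(i < xi v p n) f * q ^ (k * (n - i)))%N,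
    faithful_rep_Hei_mod v k n rho.
Proof.
move=> [vM vU [pi [pi0 vpi]] _ _] pp hp [S [hsz Sint _ Scov]] hq k n k1 n1.
have hS : size S = (p ^ f)%N by rewrite hsz hq.
have f1 : (0 < f)%N.
  case: f hS hq => // hS _; rewrite expn0 in hS.
  case: S hsz Sint Scov hS => [|s [|]] //= _ _ Scov _.
  have [y0 /[1!inE] /eqP -> h0] := Scov 0 (ip0 vM vU 0).
  have [y1 /[1!inE] /eqP -> h1] := Scov 1 (int1 vM vU).
  have := ipB vM vU h1 h0; rewrite opprB addrA subrK subr0 => h.
  by move: h; rewrite /in_pow oner_eq0 /= (v1 vM vU).
set X := xi v p n.
have Hxi : forall b, integral v b -> in_pow v n%:Z (p%:R * b) -> in_pow v (n - X)%N%:Z b.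
  move=> b ib hpb; rewrite /X /xi; case: eqP => [_|/eqP pn0]; first by rewrite subnn.
  move: hp; rewrite /in_pow (negbTE pn0) /= => hv.
  have [->|b0] := eqVneq b 0; first by [].
  apply/orP; right; move: hpb; rewrite /in_pow mulf_eq0 (negbTE b0) /= orbF.
  rewrite (negbTE pn0) /= vM //.
  move: ib; rewrite /integral /in_pow (negbTE b0) /= => ib.
  have ev : (`|v p%:R|%N)%:Z = v p%:R by rewrite gez0_abs // (le_trans _ hv).
  move: ev hv ib; set e := `|v p%:R|%N; set w := v b; move=> <-.
  rewrite /minn; case: ltnP => h; first by rewrite subnn.
  by move=> _ _ H; rewrite -subzn // lerBlDl.
have X1 : (0 < X)%N.
  rewrite /X /xi; case: eqP => // /eqP pn0.
  move: hp; rewrite /in_pow (negbTE pn0) /= => hv.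
  rewrite leq_min n1 /= -ltz_nat gez0_abs ?(le_trans _ hv) //.
have Hch : forall m, exists ch : nat -> Iirr (G vM vU pi0 vpi Sint Scov m),
    (0 < m)%N -> forall a : R v pi S m, in_pow v (m.-1)%:Z (elem a) ->
    (forall l, (l < f)%N -> chi (ch l) (elem a) = 1) -> a = red vM vU pi0 vpi Sint Scov m 0.
  move=> m; case: (posnP m) => [->|m0]; first by exists (fun _ => 0).
  have [ch hch] := level_chars vM vU pi0 vpi Sint Scov pp hp hS m0.
  by exists ch.
pose chf m := proj1_sig (constructive_indefinite_description _ (Hch m)).
have hchf : forall m, (0 < m)%N -> forall a : R v pi S m, in_pow v (m.-1)%:Z (elem a) ->
    (forall l, (l < f)%N -> chi (chf m l) (elem a) = 1) -> a = red vM vU pi0 vpi Sint Scov m 0.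
  move=> m; exact: (proj2_sig (constructive_indefinite_description _ (Hch m))).
pose J := [seq (a, b) | a <- index_iota 0 X, b <- index_iota 0 f].
pose dim (t : nat * nat) := #|{: I v pi S k (n - t.1)%N}|.
pose rho (t : nat * nat) : 'M[F]_(1 + k + 1) -> 'M[algC]_(dim t) :=
  @lrho F v vM vU pi pi0 vpi S Sint Scov k (n - t.1)%N (chf (n - t.1)%N t.2).
have [Rr [gR hR]] := comb J (rho := rho) (fun t => lrho_good k (leq_subr t.1 n) (chf _ t.2)).
apply: (pad (rho := Rr)) => //.
  rewrite big_allpairs -(big_mkord xpredT (fun i => f * q ^ (k * (n - i))))%N.
  apply: leq_sum => a _.
  apply: (@leq_trans (\sum_(0 <= b < f) q ^ (k * (n - a)))%N).
    apply: leq_sum => b _; rewrite /dim /= card_ffun card_ord.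
    rewrite mulnC expnM leq_exp2r // -hsz.
    exact: card_R.
  by rewrite sum_nat_const_nat subn0.
move=> _ _ [x [y [z [hx hy hz ->]]]] [x' [y' [z' [hx' hy' hz' ->]]]] e.
have memJ : forall a b, (a < X)%N -> (b < f)%N -> (a, b) \in J.
  by move=> a b ha hb; apply: allpairs_f; rewrite mem_index_iota.
have D := fun t (ht : t \in J) => lrho_data hx hy hz hx' hy' hz' (hR _ _ e t ht).
have [Dx _ _] := D _ (memJ 0%N 0%N X1 f1).
have ker : forall w, integral v w ->
    (forall t, t \in J -> chi (chf (n - t.1)%N t.2) w = 1) -> in_pow v n%:Z w.
  move=> w hw Hw; apply: (kernel hp Hxi hchf hw) => m hm mn l lf.
  have hmJ : (n - m < X)%N by lia.
  have := Hw (n - m, l)%N (memJ _ _ hmJ lf).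
  by rewrite /= subKn.
move=> i j; apply: (hei_congr (P := fun e => in_pow v n%:Z e)).
- exact: ip0.
- by move=> l; have := Dx l; rewrite subn0.
- move=> l; apply: ker; first by have := ipB vM vU (hy l) (hy' l).
  by move=> t ht; have [_ _ ->] := D t ht.
- apply: ker; first by have := ipB vM vU hz hz'.
  by move=> t ht; have [_ -> _] := D t ht.
Qed.
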